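(* Let $X$ be a proper geodesic metric space. For any $r\ge C>0$ and $M>0$ there exist $\hat r=\hat r(r,C,M)>0$ and $L_0=L_0(r,C,M)>0$ with the following property. Let $\alpha,\beta$ be geodesics with $d(\alpha^-,\beta^-)\le M$ and $d(\alpha^+,\beta^+)\le M$, and let $p$ be a $C$-contracting geodesic segment of length at least $L_0$. If $d(p^-,\alpha)\le r$ and $d(p^+,\alpha)\le r$, then $d(p^-,\beta)\le\hat r$ and $d(p^+,\beta)\le\hat r$.
   Context: $\gamma^-,\gamma^+$ denote the initial and terminal points of a path $\gamma$. $\pi_A$ is nearest-point projection; a closed $U$ is $C$-contracting if every geodesic $\gamma$ with $d(\gamma,U)\ge C$ satisfies $\mathrm{diam}(\pi_U(\gamma))\le C$. *)

(* Defs.v *)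
From HB Require Import structures.
From mathcomp Require Import all_boot all_order all_algebra.
From mathcomp Require Import classical_sets boolp reals.
From Stdlib Require List.
Set Implicit Arguments. Unset Strict Implicit. Unset Printing Implicit Defensive.
Import Order.TTheory GRing.Theory Num.Theory.
Local Open Scope ring_scope.
Local Open Scope classical_set_scope.

(* A path parametrised on [0, plen] (plen >= 0 for geodesics). *)
Record gpath (R : realType) (X : Type) := Path { plen : R; pmap : R -> X }.

Section Defs.
Context {R : realType} {X : Type} (d : X -> X -> R).

Definition is_metric : Prop :=
  [/\ (forall x y, 0 <= d x y), (forall x y, d x y = 0 <-> x = y),
      (forall x y, d x y = d y x) & (forall x y z, d x z <= d x y + d y z)].

Definition mopen (U : set X) : Prop :=
  forall x, U x -> exists2 e : R, 0 < e & forall y, d x y < e -> U y.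

Definition mclosed (A : set X) : Prop := mopen (~` A).

Definition mcompact (K : set X) : Prop :=
  forall (I : Type) (U : I -> set X), (forall i, mopen (U i)) ->
    K `<=` (fun x => exists i, U i x) ->
    exists s : list I, K `<=` (fun x => exists2 i, List.In i s & U i x).

Definition cball (x : X) (r : R) : set X := [set y | d x y <= r].

Definition proper_space : Prop := forall x r, mcompact (cball x r).

Definition gstart (g : gpath R X) : X := pmap g 0.
Definition gterm (g : gpath R X) : X := pmap g (plen g).
Definition gimage (g : gpath R X) : set X :=
  [set x | exists2 t, 0 <= t <= plen g & x = pmap g t].

Definition is_geodesic (g : gpath R X) : Prop :=
  0 <= plen g /\
  forall s t, 0 <= s <= plen g -> 0 <= t <= plen g ->
    d (pmap g s) (pmap g t) = `|s - t|.

Definition geodesic_space : Prop :=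
  forall x y, exists g, [/\ is_geodesic g, gstart g = x & gterm g = y].

Definition dist_pt (x : X) (A : set X) : R := inf [set d x a | a in A].
Definition dist_set (A B : set X) : R := inf [set d a b | a in A & b in B].

Definition proj (U : set X) (x : X) : set X := [set u | U u /\ d x u = dist_pt x U].
Definition proj_set (U A : set X) : set X := \bigcup_(x in A) proj U x.

Definition diam_le (S : set X) (c : R) : Prop :=
  forall a b, S a -> S b -> d a b <= c.

Definition contracting (C : R) (U : set X) : Prop :=
  mclosed U /\
  forall g, is_geodesic g -> C <= dist_set (gimage g) U ->
    diam_le (proj_set U (gimage g)) C.

End Defs.

(* Main.v *)
Require Import Defs.
From HB Require Import structures.
From mathcomp Require Import all_boot all_order all_algebra.
From mathcomp Require Import classical_sets boolp reals.
From mathcomp Require Import all_classical all_reals topology normedtype derive.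
From mathcomp Require Import ring lra.
Import Order.TTheory GRing.Theory Num.Theory.
Import numFieldNormedType.Exports.
Local Open Scope ring_scope.
Local Open Scope classical_set_scope.
Set Implicit Arguments. Unset Strict Implicit.

Lemma lip_cont (R : realType) (g : R -> R) :
  (forall t u, `|g t - g u| <= `|t - u|) -> continuous g.
Proof.
move=> H x; apply/cvgrPdist_lt => e e0.
near=> y. apply: le_lt_trans (H x y) _. near: y.
apply/nbhs_normP; exists e => //= y; rewrite /ball_norm /=.
Unshelve. all: by end_near.
Qed.

Lemma evt (R : realType) (f : R -> R) (L : R) : 0 <= L ->
  (forall t u, 0 <= t <= L -> 0 <= u <= L -> `|f t - f u| <= `|t - u|) ->
  exists2 c, 0 <= c <= L & forall t, 0 <= t <= L -> f c <= f t.
Proof.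
move=> L0 H.
pose cl t := Num.min (Num.max t 0) L.
have clP t : 0 <= cl t <= L.
  rewrite /cl; apply/andP; split; last by rewrite ge_min lexx orbT.
  by rewrite le_min L0 le_max lexx orbT.
have clid t : 0 <= t <= L -> cl t = t.
  by case/andP=> h1 h2; rewrite /cl (max_idPl h1) (min_idPl h2).
have clL t u : `|cl t - cl u| <= `|t - u|.
  have n1 := ler_norm (t - u); have n2 := ler_norm (u - t); rewrite distrC in n2.
  rewrite ler_norml /cl !minEle !maxEle.
  case: (leP t 0) => ?; case: (leP u 0) => ?; case: (leP t L) => ?;
    case: (leP u L) => ?; case: (leP 0 L) => ?.
  all: try (apply/andP; split; lra).
have gc : continuous (f \o cl).
  apply: lip_cont => t u /=; exact: le_trans (H _ _ (clP t) (clP u)) (clL t u).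
have [c cab minf] := EVT_min L0 (continuous_subspaceT gc).
rewrite in_itv /= in cab.
exists c => // t tab; have := minf t; rewrite in_itv /= tab /= => /(_ isT).
by rewrite /= !clid.
Qed.

Lemma lb_dist (R : realType) (X : Type) (d : X -> X -> R) (A : set X) x a :
  is_metric d -> A a -> dist_pt d x A <= d x a.
Proof.
move=> [d0 _ _ _] Aa.
have hl : has_lbound [set d x a | a in A] by exists 0 => _ [b _ <-].
exact: (ge_inf hl) (ex_intro2 _ _ a Aa erefl).
Qed.

Lemma dist_ge (R : realType) (X : Type) (d : X -> X -> R) (A : set X) x (c : R) :
  A !=set0 -> (forall a, A a -> c <= d x a) -> c <= dist_pt d x A.
Proof.
move=> [a Aa] H; apply: lb_le_inf; first by exists (d x a), a.
by move=> _ [b Ab <-]; apply: H.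
Qed.

Lemma dist_lt (R : realType) (X : Type) (d : X -> X -> R) (A : set X) x (c : R) :
  A !=set0 -> dist_pt d x A < c -> exists2 a, A a & d x a < c.
Proof.
move=> [a Aa] h.
have ne : [set d x a | a in A] !=set0 by exists (d x a), a.
by have [_ [b Ab <-] hb] := inf_lt ne h; exists b.
Qed.

Lemma dset_ge (R : realType) (X : Type) (d : X -> X -> R) (A B : set X) (c : R) :
  A !=set0 -> B !=set0 -> (forall a b, A a -> B b -> c <= d a b) ->
  c <= dist_set d A B.
Proof.
move=> [a Aa] [b Bb] H; apply: lb_le_inf; first by exists (d a b), a => //; exists b.
by move=> _ [a' Aa' [b' Bb' <-]]; apply: H.
Qed.

Lemma dset_lt (R : realType) (X : Type) (d : X -> X -> R) (A B : set X) (c : R) :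
  A !=set0 -> B !=set0 -> dist_set d A B < c ->
  exists a, exists2 b, A a /\ B b & d a b < c.
Proof.
move=> [a Aa] [b Bb] h.
have ne : [set d a b | a in A & b in B] !=set0 by exists (d a b), a => //; exists b.
by have [_ [a' Aa' [b' Bb' <-]] hb] := inf_lt ne h; exists a', b'.
Qed.

Lemma dist_tri (R : realType) (X : Type) (d : X -> X -> R) (A : set X) x y :
  is_metric d -> A !=set0 -> dist_pt d x A <= d x y + dist_pt d y A.
Proof.
move=> hm ne; have [d0 dE dC dT] := hm.
suff : dist_pt d x A - d x y <= dist_pt d y A by lra.
apply: dist_ge => // a Aa.
have := lb_dist x hm Aa; have := dT x y a; lra.
Qed.

Lemma gd (R : realType) (X : Type) (d : X -> X -> R) (g : gpath R X) s t :
  is_geodesic d g -> 0 <= s <= plen g -> 0 <= t <= plen g -> s <= t ->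
  d (Defs.pmap g s) (Defs.pmap g t) = t - s.
Proof. by move=> [_ H] hs ht st; rewrite H // distrC ger0_norm // subr_ge0. Qed.

Lemma in_img (R : realType) (X : Type) (g : gpath R X) t :
  0 <= t <= plen g -> gimage g (Defs.pmap g t).
Proof. by exists t. Qed.

Lemma img_ne (R : realType) (X : Type) (d : X -> X -> R) (g : gpath R X) :
  is_geodesic d g -> gimage g !=set0.
Proof. by move=> [l0 _]; exists (Defs.pmap g 0); apply: in_img; rewrite lexx l0. Qed.

Lemma nearest (R : realType) (X : Type) (d : X -> X -> R) (g : gpath R X) y :
  is_metric d -> is_geodesic d g ->
  exists2 s, 0 <= s <= plen g & d y (Defs.pmap g s) = dist_pt d y (gimage g).
Proof.
move=> hm hg; have [l0 H] := hg; have [d0 dE dC dT] := hm.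
have Hl : forall t u, 0 <= t <= plen g -> 0 <= u <= plen g ->
    `|d y (Defs.pmap g t) - d y (Defs.pmap g u)| <= `|t - u|.
  move=> t u ht hu /=; rewrite -(H t u ht hu) ler_distl.
  have := dT y (Defs.pmap g t) (Defs.pmap g u); have := dT y (Defs.pmap g u) (Defs.pmap g t).
  rewrite (dC (Defs.pmap g u) (Defs.pmap g t)) => h1 h2; apply/andP; split; lra.
have [c hc minf] := @evt _ (fun t => d y (Defs.pmap g t)) _ l0 Hl.
exists c => //; apply/le_anti/andP; split; last exact: lb_dist hm (in_img hc).
apply: dist_ge; first exact: img_ne hg.
by move=> a [t ht ->]; exact: minf.
Qed.

Definition grev (R : realType) (X : Type) (g : gpath R X) : gpath R X :=
  Path (plen g) (fun t => Defs.pmap g (plen g - t)).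

Lemma grev_geo (R : realType) (X : Type) (d : X -> X -> R) (g : gpath R X) :
  is_geodesic d g -> is_geodesic d (grev g).
Proof.
move=> [l0 H]; split => //= s t /andP[s0 s1] /andP[t0 t1].
rewrite H; last 2 first.
- by apply/andP; split; lra.
- by apply/andP; split; lra.
have -> : plen g - s - (plen g - t) = - (s - t) by ring.
by rewrite normrN.
Qed.

Lemma grev_img (R : realType) (X : Type) (g : gpath R X) :
  gimage (grev g) = gimage g.
Proof.
apply/seteqP; split => x [t /andP[t0 t1] ->] /=.
- by exists (plen g - t) => //; apply/andP; split; lra.
- exists (plen g - t); first by apply/andP; split; lra.
  by rewrite /grev /=; congr Defs.pmap; ring.
Qed.

Lemma grev_start (R : realType) (X : Type) (g : gpath R X) :
  gstart (grev g) = gterm g.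
Proof. by rewrite /gstart /gterm /= subr0. Qed.

Lemma grev_term (R : realType) (X : Type) (g : gpath R X) :
  gterm (grev g) = gstart g.
Proof. by rewrite /gstart /gterm /= subrr. Qed.

Lemma entrance (R : realType) (X : Type) (d : X -> X -> R) (C : R)
  (p g : gpath R X) q :
  is_metric d -> 0 < C -> is_geodesic d p -> contracting d C (gimage p) ->
  is_geodesic d g -> Defs.proj d (gimage p) (gstart g) q ->
  dist_set d (gimage g) (gimage p) < C ->
  exists2 w, gimage g w & d w q <= 4 * C.
Proof.
move=> hm C0 hp [_ hc] hg [Uq hq] hlt.
have [d0 dE dC dT] := hm; have [lg0 Hg] := hg.
have Une := img_ne hp.
rewrite /gstart in hq.
set U := gimage p in Une hq hc hlt Uq *.
have [a [b [[t ht ->] Ub] hab]] := dset_lt (img_ne hg) Une hlt.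
pose S := [set t | 0 <= t <= plen g /\ dist_pt d (Defs.pmap g t) U < C].
have St : S t by split => //; exact: le_lt_trans (lb_dist _ hm Ub) hab.
have Slb : lbound S 0 by move=> u [/andP[]].
have hinf : has_inf S by split; [exists t | exists 0].
have t0ge : 0 <= inf S by apply: lb_le_inf => //; exists t.
have [t1 St1 t1lt] := inf_adherent C0 hinf.
have t0t1 : inf S <= t1 := ge_inf hinf.2 St1.
have [/andP[t1a t1b] t1d] := St1.
have h00 : (0:R) <= 0 <= plen g by rewrite lexx lg0.
case: (ltP (inf S) C) => hC.
  exists (Defs.pmap g 0); first exact: in_img.
  rewrite hq.
  have := dist_tri (Defs.pmap g 0) (Defs.pmap g t1) hm Une.
  rewrite (gd hg h00 (t:=t1)) ?t1a ?t1b //.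
  lra.
pose s := inf S - C.
have hs : 0 <= s <= plen g by apply/andP; split; rewrite /s; lra.
pose g' := Path s (Defs.pmap g).
have hg' : is_geodesic d g'.
  split; first by rewrite /= /s; lra.
  move=> u v /= /andP[u0 u1] /andP[v0 v1]; apply: Hg; apply/andP; split; lra.
have far : forall u, 0 <= u <= s -> C <= dist_pt d (Defs.pmap g u) U.
  move=> u /andP[u0 u1]; rewrite leNgt; apply/negP => h.
  have Su : S u by split => //; apply/andP; split; rewrite /s in u1; lra.
  have := ge_inf hinf.2 Su; rewrite /s in u1; lra.
have hds : C <= dist_set d (gimage g') U.
  apply: dset_ge; [exact: img_ne hg' | exact: Une |].
  move=> _ b' [u hu ->] Ub'; exact: le_trans (far u hu) (lb_dist _ hm Ub').
have hdiam := hc g' hg' hds.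
have [sw hsw hw] := nearest (Defs.pmap g s) hm hp.
have hss : 0 <= s <= s by case/andP: hs => h1 h2; apply/andP; split; lra.
have h0s : (0:R) <= 0 <= s by case/andP: hs => h1 h2; apply/andP; split; lra.
have P1 : Defs.proj_set d U (gimage g') q.
  by exists (Defs.pmap g 0); [exact: (in_img (g := g') h0s) | split].
have P2 : Defs.proj_set d U (gimage g') (Defs.pmap p sw).
  exists (Defs.pmap g s); first exact: (in_img (g := g') hss).
  by split => //; exact: in_img.
have hqq := hdiam _ _ P1 P2.
exists (Defs.pmap g s); first exact: in_img.
have := dist_tri (Defs.pmap g s) (Defs.pmap g t1) hm Une.
have st1 : s <= t1 by rewrite /s; lra.
rewrite (gd hg hs (t:=t1)) ?t1a ?t1b // -hw.
have := dT (Defs.pmap g s) (Defs.pmap p sw) q.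
rewrite (dC (Defs.pmap p sw) q).
rewrite /s; lra.
Qed.

Lemma projlip (R : realType) (X : Type) (d : X -> X -> R) (C : R)
  (p : gpath R X) y z qy qz :
  is_metric d -> geodesic_space d -> 0 < C -> is_geodesic d p ->
  contracting d C (gimage p) ->
  Defs.proj d (gimage p) y qy -> Defs.proj d (gimage p) z qz ->
  d qy qz <= d y z + 8 * C.
Proof.
move=> hm hgs C0 hp hc hy hz; have [d0 dE dC dT] := hm.
have [g [hg gs gt]] := hgs y z.
have [lg0 Hg] := hg.
have h00 : (0:R) <= 0 <= plen g by rewrite lexx lg0.
have hll : plen g <= plen g <= plen g by rewrite lexx.
have hll' : 0 <= plen g <= plen g by rewrite lexx lg0.
case: (leP C (dist_set d (gimage g) (gimage p))) => hC.
  have hd := hc.2 g hg hC.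
  have : d qy qz <= C.
    apply: hd.
      by exists y => //; rewrite -gs; exact: in_img.
    by exists z => //; rewrite -gt; exact: in_img.
  have := d0 y z; lra.
have [w [s hs ->] hw] := entrance hm C0 hp hc hg (q:=qy) (ltac:(by rewrite gs)) hC.
have hrg := grev_geo hg.
have hC' : dist_set d (gimage (grev g)) (gimage p) < C by rewrite grev_img.
have [w' wi' hw'] := entrance hm C0 hp hc hrg (q:=qz)
   (ltac:(by rewrite grev_start gt)) hC'.
rewrite grev_img in wi'; case: wi' => s' hs' ews; subst w'.
have hyz : d y z = plen g by rewrite -gs -gt /gstart /gterm (gd hg h00 hll') ?subr0 // lexx.
have := Hg s s' hs hs'.
have : `|s - s'| <= plen g.
  rewrite ler_distl; case/andP: hs => ? ?; case/andP: hs' => ? ?.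
  apply/andP; split; lra.
have := dT qy (Defs.pmap g s) qz; have := dT (Defs.pmap g s) (Defs.pmap g s') qz.
rewrite (dC qy (Defs.pmap g s)).
lra.
Qed.

Lemma mainG (R : realType) (X : Type) (d : X -> X -> R) (r C M : R)
  (alpha beta p : gpath R X) t1 t2 :
  is_metric d -> geodesic_space d -> 0 < C ->
  is_geodesic d alpha -> is_geodesic d beta -> is_geodesic d p ->
  contracting d C (gimage p) ->
  d (gstart alpha) (gstart beta) <= M -> d (gterm alpha) (gterm beta) <= M ->
  8 * r + 2 * M + 18 * C <= plen p ->
  0 <= t1 <= plen alpha -> 0 <= t2 <= plen alpha -> t1 <= t2 ->
  d (gstart p) (Defs.pmap alpha t1) <= r -> d (gterm p) (Defs.pmap alpha t2) <= r ->
  dist_pt d (gstart p) (gimage beta) <= 4 * r + M + 12 * C.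
Proof.
move=> hm hgs C0 ha hb hp hc hM1 hM2 hL ht1 ht2 t12 hx hy.
have [d0 dE dC dT] := hm.
have [la0 Ha] := ha; have [lp0 Hp] := hp; have [lb0 Hb] := hb.
have hp0 : (0:R) <= 0 <= plen p by rewrite lexx lp0.
have hpL : 0 <= plen p <= plen p by rewrite lexx lp0.
have ha0 : (0:R) <= 0 <= plen alpha by rewrite lexx la0.
have haL : 0 <= plen alpha <= plen alpha by rewrite lexx la0.
have hb0 : (0:R) <= 0 <= plen beta by rewrite lexx lb0.
have hbL : 0 <= plen beta <= plen beta by rewrite lexx lb0.
rewrite /gstart /gterm in hx hy hM1 hM2 *.
have [s0 hs0 e0] := nearest (Defs.pmap alpha 0) hm hp.
have [se hse ee] := nearest (Defs.pmap alpha (plen alpha)) hm hp.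
have [sb hsb eb] := nearest (Defs.pmap beta 0) hm hp.
have [sb' hsb' eb'] := nearest (Defs.pmap beta (plen beta)) hm hp.
have D0x := lb_dist (Defs.pmap alpha 0) hm (in_img hp0).
have Dey := lb_dist (Defs.pmap alpha (plen alpha)) hm (in_img hpL).
move: (ht1) (ht2) (hs0) (hse) (hsb) (hsb') => /andP[t1a t1b] /andP[t2a t2b]
  /andP[s0a s0b] /andP[sea seb] /andP[sba sbb] /andP[sba' sbb'].
have e02 := gd ha ha0 ht2 t2a.
have e01 := gd ha ha0 ht1 t1a.
have e12 := gd ha ht1 ht2 t12.
have e1L := gd ha ht1 haL t1b.
have e2L := gd ha ht2 haL t2b.
have exy := gd hp hp0 hpL lp0.
have eq0y := gd hp hs0 hpL s0b.
have exe := gd hp hp0 hse sea.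
have exb := gd hp hp0 hsb sba.
rewrite !subr0 in e02 e01 exy exe exb.
set a0 := Defs.pmap alpha 0 in e0 D0x e02 e01 hM1 *.
set aL := Defs.pmap alpha (plen alpha) in ee Dey e1L e2L hM2 *.
set a1 := Defs.pmap alpha t1 in hx e01 e12 e1L *.
set a2 := Defs.pmap alpha t2 in hy e02 e12 e2L *.
set x := Defs.pmap p 0 in D0x exy exe exb *.
set y := Defs.pmap p (plen p) in Dey exy eq0y *.
set q0 := Defs.pmap p s0 in e0 eq0y *.
set qe := Defs.pmap p se in ee exe *.
have T1 := dT a0 q0 a2; have T1' := dT q0 y a2.
have T2 := dT a0 a1 x.
have T3 := dT x a1 y; have T3' := dT a1 a2 y.
have T4 := dT aL qe a1; have T4' := dT qe x a1.
have T5 := dT aL a2 y.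
rewrite (dC a1 x) (dC a2 y) (dC qe x) in T1' T2 T3 T3' T4 T4' T5.
rewrite (dC aL a1) (dC aL a2) in T4 T5.
have hs0r : s0 <= 4 * r by lra.
have hser : plen p - se <= 4 * r by lra.
have hq0 : Defs.proj d (gimage p) a0 q0 by split => //; exact: in_img.
have hqe : Defs.proj d (gimage p) aL qe by split => //; exact: in_img.
have hqb : Defs.proj d (gimage p) (Defs.pmap beta 0) (Defs.pmap p sb)
  by split => //; exact: in_img.
have hqb' : Defs.proj d (gimage p) (Defs.pmap beta (plen beta)) (Defs.pmap p sb')
  by split => //; exact: in_img.
have l1 := projlip hm hgs C0 hp hc hq0 hqb.
have l2 := projlip hm hgs C0 hp hc hqe hqb'.
rewrite /q0 /qe !Hp // in l1 l2.
move: l1 l2; rewrite !ler_distl => /andP[l1a l1b] /andP[l2a l2b].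
have hsb_up : sb <= 4 * r + M + 8 * C by lra.
case: (leP C (dist_set d (gimage beta) (gimage p))) => hC.
  have hd := hc.2 beta hb hC.
  have : d (Defs.pmap p sb) (Defs.pmap p sb') <= C.
    apply: hd.
      by exists (Defs.pmap beta 0) => //; exact: in_img.
    by exists (Defs.pmap beta (plen beta)) => //; exact: in_img.
  rewrite Hp // ler_distl => /andP[h1 h2].
  lra.
have [w wi hw] := entrance hm C0 hp hc hb hqb hC.
apply: le_trans (lb_dist x hm wi) _.
have := dT x (Defs.pmap p sb) w.
rewrite (dC (Defs.pmap p sb) w).
lra.
Qed.

Lemma mainG2 (R : realType) (X : Type) (d : X -> X -> R) (r C M : R)
  (alpha beta p : gpath R X) :
  is_metric d -> geodesic_space d -> 0 < C ->
  is_geodesic d alpha -> is_geodesic d beta -> is_geodesic d p ->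
  contracting d C (gimage p) ->
  d (gstart alpha) (gstart beta) <= M -> d (gterm alpha) (gterm beta) <= M ->
  8 * r + 2 * M + 18 * C <= plen p ->
  dist_pt d (gstart p) (gimage alpha) <= r -> dist_pt d (gterm p) (gimage alpha) <= r ->
  dist_pt d (gstart p) (gimage beta) <= 4 * r + M + 12 * C.
Proof.
move=> hm hgs C0 ha hb hp hc hM1 hM2 hL h1 h2.
have [t1 ht1 e1] := nearest (gstart p) hm ha.
have [t2 ht2 e2] := nearest (gterm p) hm ha.
case: (leP t1 t2) => t12.
  apply: (@mainG _ _ d r C M alpha beta p t1 t2 hm hgs C0 ha hb hp hc hM1 hM2 hL
    ht1 ht2 t12); by [rewrite e1 | rewrite e2].
rewrite -(grev_img beta).
move: (ht1) (ht2) => /andP[t1a t1b] /andP[t2a t2b].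
apply: (@mainG _ _ d r C M (grev alpha) (grev beta) p (plen alpha - t1)
  (plen alpha - t2) hm hgs C0 (grev_geo ha) (grev_geo hb) hp hc _ _ hL).
- by rewrite !grev_start.
- by rewrite !grev_term.
- by rewrite /=; apply/andP; split; lra.
- by rewrite /=; apply/andP; split; lra.
- by lra.
- rewrite /= (_ : plen alpha - (plen alpha - t1) = t1) ?e1 //; ring.
- rewrite /= (_ : plen alpha - (plen alpha - t2) = t2) ?e2 //; ring.
Qed.

Unset Implicit Arguments.

Theorem lemma2p23 (R : realType) (X : Type) (d : X -> X -> R) :
  is_metric d -> proper_space d -> geodesic_space d ->
  forall r C M : R, 0 < C -> C <= r -> 0 < M ->
  exists rhat L0 : R, [/\ 0 < rhat, 0 < L0 &
    forall alpha beta p : gpath R X,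
      is_geodesic d alpha -> is_geodesic d beta ->
      d (gstart alpha) (gstart beta) <= M -> d (gterm alpha) (gterm beta) <= M ->
      is_geodesic d p -> contracting d C (gimage p) -> L0 <= plen p ->
      dist_pt d (gstart p) (gimage alpha) <= r ->
      dist_pt d (gterm p) (gimage alpha) <= r ->
      dist_pt d (gstart p) (gimage beta) <= rhat /\
      dist_pt d (gterm p) (gimage beta) <= rhat].
Proof.
move=> hm _ hgs r C M C0 Cr M0.
exists (4 * r + M + 12 * C), (8 * r + 2 * M + 18 * C); split; [lra | lra |].
move=> alpha beta p ha hb hM1 hM2 hp hc hL h1 h2; split.
  exact: (@mainG2 _ _ d r C M alpha beta p hm hgs C0 ha hb hp hc hM1 hM2 hL h1 h2).
rewrite -(grev_start p).
have hc' : contracting d C (gimage (grev p)) by rewrite grev_img.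
apply: (@mainG2 _ _ d r C M alpha beta (grev p) hm hgs C0 ha hb (grev_geo hp) hc'
  hM1 hM2 hL).
- by rewrite grev_start.
- by rewrite grev_term.
Qed.
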